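(* Let $\mathfrak g$ be of type $A_n$ with $n\ge2$ and $r=\frac{n+1}{\gcd(n+1,2)}$. For every $k$ with $1\le k\le n$ and $k\ne1,r$, one has $d_k\lambda_1+\lambda_k\in\Psi_{\min}$, where $d_k=2r-k$ if $r<k<n+1$ and $d_k=r-k$ otherwise.
   Context: Type $A_n$ has Dynkin diagram $1-2-\cdots-n$, with fundamental weights $\lambda_1,\dots,\lambda_n$, root lattice $Q$ and dominant integral weights $\Lambda^+=\bigoplus_i\mathbb N\lambda_i$. $\Psi=\{\lambda\in\Lambda^+:2\lambda\in Q\}$ and $\Psi_{\min}=\{\lambda\in\Psi\setminus\{0\}:\lambda\ne\mu_1+\mu_2\text{ for all }\mu_1,\mu_2\in\Psi\setminus\{0\}\}$. *)

(* Defs.v *)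
From mathcomp Require Import all_boot all_order all_algebra.
From mathcomp Require Import ssrint.
Set Implicit Arguments. Unset Strict Implicit. Unset Printing Implicit Defensive.
Import GRing.Theory Num.Theory.

(* Type A_n, nodes 1..n represented by ordinals 0..n-1 of 'I_n.
   Weights are written in the basis of fundamental weights lambda_1..lambda_n.
   A dominant integral weight = nonnegative integer coordinates. *)
Definition domweight (n : nat) := {ffun 'I_n -> nat}.

Definition fundw (n k : nat) : domweight n := [ffun i : 'I_n => (i.+1 == k : nat)].

Definition zerow (n : nat) : domweight n := [ffun _ => 0%N].
Definition addw (n : nat) (a b : domweight n) : domweight n := [ffun i => (a i + b i)%N].
Definition scalew (n : nat) (c : nat) (a : domweight n) : domweight n := [ffun i => (c * a i)%N].

(* Cartan matrix of A_n: the simple root alpha_j = sum_i cartanA i j * lambda_i *)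
Definition cartanA (n : nat) (i j : 'I_n) : int :=
  if i == j then Posz 2
  else if (i.+1 == j :> nat) || (j.+1 == i :> nat) then (-1)%R else Posz 0.

Definition in_rootlattice (n : nat) (v : 'I_n -> int) : Prop :=
  exists c : 'I_n -> int, forall i : 'I_n, v i = (\sum_(j < n) c j * cartanA i j)%R.

Definition inPsi (n : nat) (l : domweight n) : Prop :=
  in_rootlattice (fun i => Posz (2 * l i)%N).

Definition inPsi_min (n : nat) (l : domweight n) : Prop :=
  inPsi l /\ l <> zerow n /\
  forall m1 m2 : domweight n, inPsi m1 -> inPsi m2 -> m1 <> zerow n -> m2 <> zerow n ->
    l <> addw m1 m2.

(* Main.v *)
Require Import Defs.
From mathcomp Require Import all_boot all_order all_algebra.
From mathcomp Require Import zify ring lra.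
Import GRing.Theory Num.Theory.
Local Open Scope ring_scope.

Lemma sum_ind (n m : nat) (g : nat -> int) :
  \sum_(j < n) g j * ((j:nat) == m)%:R = if (m < n)%N then g m else 0.
Proof.
elim: n => [|n IH]; first by rewrite big_ord0.
rewrite big_ord_recr /= IH.
case: (eqVneq n m) => [->|Hnm]; first by rewrite ltnn ltnSn mulr1 add0r.
rewrite mulr0 addr0; have -> : (m < n.+1)%N = (m < n)%N by lia.
by [].
Qed.

Lemma cartan_dec n (i j : 'I_n) : cartanA i j =
  2%:R * ((j:nat) == i)%:R - ((j:nat) == i.+1)%:R
   - (0 < i)%N%:R * ((j:nat) == i.-1)%:R.
Proof.
rewrite /cartanA; have -> : (i == j) = ((i:nat) == j) by [].
move: (nat_of_ord i) (nat_of_ord j) => a b.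
have [->|H1] := eqVneq a b.
  have -> : (b == b.+1) = false by lia.
  case: b => [|b] //=.
  have -> : (b.+1 == b) = false by lia.
  by rewrite !mulr0 !subr0 mulr1.
rewrite mulr0 add0r.
have [E|E] := eqVneq b a.+1.
  rewrite E ?eqxx /=; have -> : (a.+1 == a.-1) = false by lia.
  by rewrite mulr0 subr0.
have [E2|E2] := eqVneq b.+1 a.
  by subst a; rewrite /= eqxx.
have -> : (b == a.-1) = false by lia.
by rewrite mulr0.
Qed.

Lemma row_sum n (g : nat -> int) (i : 'I_n) :
  \sum_(j < n) g j * cartanA i j =
  2 * g i - (if (i.+1 < n)%N then g i.+1 else 0) - (0<i)%N%:R * g i.-1.
Proof.
have E : forall j : 'I_n, g j * cartanA i j =
   2 * (g j * ((j:nat)==i)%:R) - g j * ((j:nat) == i.+1)%:R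
   - (0<i)%N%:R * (g j * ((j:nat)==i.-1)%:R).
  by move=> j; rewrite cartan_dec; ring.
rewrite (eq_bigr _ (fun j _ => E j)) !sumrB -!mulr_sumr !sum_ind ltn_ord.
case: (posnP i) => [->|Hi] //=; first by rewrite !mul0r.
have : (i.-1 < n)%N by have := ltn_ord i; lia. by move=> ->.
Qed.

Lemma cartan_sym n (i j : 'I_n) : cartanA i j = cartanA j i.
Proof. by rewrite /cartanA eq_sym orbC. Qed.

Lemma psi_nec n (v : 'I_n -> int) : (0 < n)%N -> in_rootlattice v ->
  exists c : int, \sum_(i < n) (i.+1)%:Z * v i = (n.+1)%:Z * c.
Proof.
move=> n0 [c Hc]; exists (\sum_(j < n) c j * ((j.+1 == n))%:R).
under eq_bigr => i _ do rewrite Hc mulr_sumr.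
rewrite exchange_big /= mulr_sumr; apply: eq_bigr => j _.
have -> : \sum_(i < n) (i.+1)%:Z * (c j * cartanA i j) =
   c j * \sum_(i < n) (fun m => (m.+1)%:Z) i * cartanA j i.
  by rewrite mulr_sumr; apply: eq_bigr => i _; rewrite cartan_sym /=; ring.
rewrite (@row_sum n (fun m => (m.+1)%:Z)) /=.
have Hj := ltn_ord j.
rewrite mulrCA; congr (c j * _).
case: (ltnP j.+1 n) => H1; case: (posnP j) => H2.
- have -> : (j.+1 == n) = false by lia. rewrite /= ?mul1r ?mul0r ?mulr1 ?mulr0; lia.
- have -> : (j.+1 == n) = false by lia. rewrite /= ?mul1r ?mul0r ?mulr1 ?mulr0; lia.
- have -> : (j.+1 == n) = true by lia. rewrite /= ?mul1r ?mul0r ?mulr1 ?mulr0; lia.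
- have -> : (j.+1 == n) = true by lia. rewrite /= ?mul1r ?mul0r ?mulr1 ?mulr0; lia.
Qed.

Lemma psi_first n (m : domweight n) (i0 : 'I_n) :
  val i0 = 0%N -> (forall i, i != i0 -> m i = 0%N) -> inPsi m ->
  exists c : int, (2 * m i0)%N%:Z = (n.+1)%:Z * c.
Proof.
move=> Hi0 Hm Hp.
have n0 : (0 < n)%N by have := ltn_ord i0; lia.
have [c Hc] := @psi_nec n _ n0 Hp.
exists c; rewrite -Hc.
have -> : \sum_(i < n) (i.+1)%:Z * (2 * m i)%N%:Z =
  \sum_(i < n) (fun j => (2 * m i0)%N%:Z) i * ((i:nat) == 0%N)%:R.
  apply: eq_bigr => i _ /=.
  have [E|E] := eqVneq i i0.
    by rewrite E Hi0 /= mul1r mulr1.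
  rewrite Hm // muln0 mulr0.
  have -> : ((i:nat) == 0%N) = false by apply/negbTE; apply: contra E => /eqP H; apply/eqP/val_inj; rewrite /= H Hi0.
  by rewrite mulr0.
by rewrite (@sum_ind n 0 (fun j => (2 * m i0)%N%:Z)) n0.
Qed.

Local Close Scope ring_scope.
Local Open Scope nat_scope.
Theorem lemma4p5 (n : nat) (hn : 2 <= n) (k : nat) (hk1 : 1 <= k) (hkn : k <= n) :
  let r := (n.+1 %/ gcdn n.+1 2)%N in
  k <> 1%N -> k <> r ->
  let d := if (r < k) && (k < n.+1) then (2 * r - k)%N else (r - k)%N in
  inPsi_min (addw (scalew d (fundw n 1)) (fundw n k)).
Proof.
move=> r Hk1 Hkr d.
have Hm2 := modn2 n.+1.
have Hr : (n.+1 %% 2 = 1 /\ r = n.+1) \/ (n.+1 = 2 * r)%N.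
  rewrite /r -gcdn_modl modn2; case Ho: (odd n.+1); rewrite Ho in Hm2; rewrite /=.
    by left; rewrite divn1.
  right; have -> : gcdn 0 2 = 2 by []. lia.
have Hd : (d < r)%N /\ (d + k = r \/ d + k = 2 * r)%N.
  rewrite /d; case: ifP => H.
    move/andP: H => [H1 H2]; lia.
  move/negbT: H; rewrite negb_and -!leqNgt => H; lia.
clearbody r d.
have [s [Hs1 Hs]] : exists s, (s = 1 \/ s = 2)%N /\ (s * n.+1 = 2 * (d + k))%N.
  case: Hr => [[Ho Er]|Er].
    exists 2%N; lia.
  case: Hd => _ [Hd|Hd]; [exists 1%N | exists 2%N]; lia.
have Hl : forall i : 'I_n, (addw (scalew d (fundw n 1)) (fundw n k)) i
            = (d * (i.+1 == 1%N) + (i.+1 == k))%N.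
  by move=> i; rewrite !ffunE.
split; [|split].
-
  exists (fun j : 'I_n => ((2 * d)%N%:Z + (j.+1)%:Z * (2 - s%:Z) - 2 * ((j.+1 - k)%N)%:Z)%R).
  move=> i.
  rewrite (@row_sum n (fun j => ((2 * d)%N%:Z + (j.+1)%:Z * (2 - s%:Z) - 2 * ((j.+1 - k)%N)%:Z)%R)) Hl.
  have Hi := ltn_ord i.
  case: Hs1 => Es; rewrite Es in Hs *;
  case: (ltnP i.+1 n) => H1; case: (posnP i) => H2; rewrite ?H2 /= ?mul1r ?mul0r;
  lia.
- move=> H.
  have Hlt : (k.-1 < n)%N by lia.
  have := congr1 (fun f : domweight n => f (Ordinal Hlt)) H; rewrite Hl ffunE /=.
  have -> : k.-1.+1 = k by lia.
  by rewrite eqxx addn1.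
- move=> m1 m2 P1 P2 nz1 nz2 Heq.
  have Hc : forall i : 'I_n, (d * (i.+1 == 1%N) + (i.+1 == k))%N = (m1 i + m2 i)%N.
    by move=> i; rewrite -Hl Heq ffunE.
  have n0 : (0 < n)%N by lia.
  have Hlt : (k.-1 < n)%N by lia.
  pose ik := Ordinal Hlt.
  pose i0 := Ordinal n0.
  suff core : forall m : domweight n, inPsi m -> m <> zerow n -> (forall i : 'I_n, m i <= d * (i.+1 == 1%N) + (i.+1 == k))%N ->
      m ik = 0%N -> False.
    have := Hc ik; rewrite /= (_ : k.-1.+1 = k); last by lia.
    rewrite eqxx (_ : (k == 1%N) = false); last by apply/eqP.
    move=> E.
    have [E1|E1] : m1 ik = 0%N \/ m2 ik = 0%N by lia.
      by apply: (core m1 P1 nz1) => // i; rewrite Hc leq_addr.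
    by apply: (core m2 P2 nz2) => // i; rewrite Hc leq_addl.
  move=> m Pm nzm Hle Hmk.
  have Hz : forall i, i != i0 -> m i = 0%N.
    move=> i Hi.
    have [E|E] := eqVneq i ik; first by rewrite E.
    have := Hle i.
    have -> : (i.+1 == 1%N) = false.
      apply/negbTE; apply: contra Hi => /eqP H; apply/eqP/val_inj => /=; lia.
    have -> : (i.+1 == k) = false.
      apply/negbTE; apply: contra E => /eqP H; apply/eqP/val_inj => /=; lia.
    by rewrite muln0; case: (m i).
  have [c Hcc] := @psi_first n m i0 (erefl _) Hz Pm.
  have Ha : (0 < m i0)%N.
    rewrite lt0n; apply/negP => /eqP E; apply: nzm; apply/ffunP => i; rewrite ffunE.
    by have [->|Hi] := eqVneq i i0; [rewrite E | rewrite Hz].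
  have Had : (m i0 <= d)%N.
    have := Hle i0; rewrite /= (_ : (1 == k) = false) ?muln1 ?addn0 //.
    by apply/eqP => H; apply: Hk1.
  move: Ha Had Hcc; move: (m i0) => a Ha Had Hcc.
  case: Hr => [[Ho Er]|Er].
    have Hc1 : c = 1%R.
      have : (c <= 0 \/ c = 1 \/ 2 <= c)%R by lia.
      case=> [H|[H|H]] //; nia.
    rewrite Hc1 mulr1 in Hcc; lia.
  have : (c <= 0 \/ 1 <= c)%R by lia.
  case=> H; nia.
Qed.
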